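(* Let $\Lambda_{[n]}=\{\{1,2,\dots,n\}:n\in\mathbb N\}\subseteq\mathcal P_{fin}(\mathbb N)$ (where $\mathbb N=\{1,2,3,\dots\}$), let $I$ be a fine ideal of $\mathfrak F(\mathcal P_{fin}(\mathbb N),\mathbb R)$ containing $I_{0,\Lambda_{[n]}}$, and let $P$ be the probability of the NAP-space produced by $(\mathbb N,1,I)$ (constant weight $1$). If $A\subseteq\mathbb N$ and the limit $L=\lim_{n\to\infty}|A\cap\{1,\dots,n\}|/n$ exists (in the classical sense), then $P(A)-L$ is infinitesimal.
   Context: $\mathcal P_{fin}(\Omega)$ is the set of finite subsets of $\Omega$ and $\mathfrak F=\mathfrak F(\mathcal P_{fin}(\Omega),\mathbb R)$ the real algebra of functions $\mathcal P_{fin}(\Omega)\to\mathbb R$ with pointwise operations. For $\omega\in\Omega$, $\chi_\lambda(\omega)=1$ if $\omega\in\lambda$, else $0$. An ideal $I$ of $\mathfrak F$ is fine if it is maximal and $\lambda\mapsto 1-\chi_\lambda(\omega)$ lies in $I$ for every $\omega\in\Omega$. For $\Lambda\subseteq\mathcal P_{fin}(\Omega)$, $I_{0,\Lambda}=\{\varphi\in\mathfrak F:\varphi(\lambda)=0\text{ for all }\lambda\in\Lambda\}$. The NAP-space produced by $(\Omega,w,I)$ ($w:\Omega\to\mathbb R^+$, $I$ fine) has range field $\mathfrak F/I$, $J$ the canonical projection $\varphi\mapsto\varphi+I$, and $P(A)=J\big(\lambda\mapsto\sum_{\omega\in A\cap\lambda}w(\omega)\big)/J\big(\lambda\mapsto\sum_{\omega\in\lambda}w(\omega)\big)$.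 An element $x$ of this ordered field is infinitesimal if $|x|<1/n$ for all $n\in\mathbb N$. *)

(* Defs.v *)
From Stdlib Require Import Reals List Arith Classical ClassicalEpsilon.
Open Scope R_scope.

(* Omega = N = {1,2,3,...}, represented by natural numbers >= 1.
   A finite subset of Omega is represented canonically by the strictly
   increasing list of its elements (all >= 1). *)
Fixpoint incr_from (prev : nat) (l : list nat) : bool :=
  match l with
  | nil => true
  | x :: t => Nat.ltb prev x && incr_from x t
  end.

(* P_fin(N) : strictly increasing lists of positive naturals (boolean proof,
   so equality of subsets is equality of lists). *)
Definition Pfin : Type := { l : list nat | incr_from 0 l = true }.

Definition elems (lam : Pfin) : list nat := proj1_sig lam.

Definition Falg : Type := Pfin -> R.

Definition chi (lam : Pfin) (w : nat) : R :=
  if existsb (Nat.eqb w) (elems lam) then 1 else 0.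

Definition is_ideal (I : Falg -> Prop) : Prop :=
  I (fun _ => 0) /\
  (forall f g, I f -> I g -> I (fun l => f l + g l)) /\
  (forall f g, I f -> I (fun l => g l * f l)).

Definition is_maximal_ideal (I : Falg -> Prop) : Prop :=
  is_ideal I /\ ~ I (fun _ => 1) /\
  (forall J : Falg -> Prop, is_ideal J -> (forall f, I f -> J f) ->
     (forall f, J f -> I f) \/ (forall f, J f)).

Definition is_fine (I : Falg -> Prop) : Prop :=
  is_maximal_ideal I /\
  (forall w : nat, (1 <= w)%nat -> I (fun l => 1 - chi l w)).

Definition in_Lambda_n (lam : Pfin) : Prop :=
  exists n : nat, (1 <= n)%nat /\ elems lam = seq 1 n.

Definition I0_Lambda_n (f : Falg) : Prop :=
  forall lam, in_Lambda_n lam -> f lam = 0.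

Definition indic (A : nat -> Prop) (k : nat) : R :=
  if excluded_middle_informative (A k) then 1 else 0.

Definition weightA (A : nat -> Prop) (lam : Pfin) : R :=
  fold_right (fun k acc => indic A k + acc) 0 (elems lam).

Definition weightAll (lam : Pfin) : R := INR (length (elems lam)).

(* The quotient field F/I, accessed through representatives:
   J(f) = J(g)  iff  f - g in I;
   J(f) <= J(g) iff  f <= g + h pointwise for some h in I
   (the order induced on F/I by the pointwise order of F). *)
Definition qeq (I : Falg -> Prop) (f g : Falg) : Prop :=
  I (fun l => f l - g l).
Definition qle (I : Falg -> Prop) (f g : Falg) : Prop :=
  exists h, I h /\ forall l, f l <= g l + h l.
Definition qlt (I : Falg -> Prop) (f g : Falg) : Prop :=
  qle I f g /\ ~ qeq I f g.

(* J(f) is infinitesimal: |J f| < 1/n for all n in N, i.e.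
   -1/n < J f < 1/n, reals embedded as constant functions. *)
Definition infinitesimal (I : Falg -> Prop) (f : Falg) : Prop :=
  forall n : nat, (1 <= n)%nat ->
    qlt I (fun _ => - / INR n) f /\ qlt I f (fun _ => / INR n).

(* rho represents P(A) = J(weightA A) / J(weightAll) in F/I,
   i.e. J(rho) * J(weightAll) = J(weightA A). *)
Definition represents_P (I : Falg -> Prop) (A : nat -> Prop) (rho : Falg) : Prop :=
  qeq I (fun l => rho l * weightAll l) (weightA A).

Definition countA (A : nat -> Prop) (n : nat) : R :=
  fold_right (fun k acc => indic A k + acc) 0 (seq 1 n).

(* Main.v *)
Require Import Defs.
From Stdlib Require Import Reals List Arith Classical ClassicalEpsilon.
From Stdlib Require Import Lra Lia FunctionalExtensionality.
Open Scope R_scope.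

Lemma I_ext (I : Falg -> Prop) (f g : Falg) : I f -> (forall l, f l = g l) -> I g.
Proof. intros H E. replace g with f; [exact H| apply functional_extensionality; exact E]. Qed.

Lemma chi_notin lam m w : elems lam = seq 1 m -> (m < w)%nat -> chi lam w = 0.
Proof.
  intros Hl Hw. unfold chi; rewrite Hl.
  destruct (existsb (Nat.eqb w) (seq 1 m)) eqn:E; [|reflexivity].
  apply existsb_exists in E. destruct E as [x [Hin Heq]].
  apply Nat.eqb_eq in Heq; subst. apply in_seq in Hin. lia.
Qed.

Lemma KL (I : Falg -> Prop) (HI : is_fine I) (Hsub : forall f, I0_Lambda_n f -> I f)
  M (f : Falg) :
  (forall m lam, (M <= m)%nat -> elems lam = seq 1 m -> f lam = 0) -> I f.
Proof.
  intros Hf. destruct HI as [[[I0 [Iadd Imul]] _] Hfine].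
  pose proof (Imul _ f (Hfine (S M) ltac:(lia))) as H1.
  assert (H2 : I (fun l => f l * chi l (S M))).
  { apply Hsub. intros lam [m [Hm Hl]]. destruct (le_lt_dec M m).
    - rewrite (Hf m lam l Hl); ring.
    - rewrite (chi_notin lam m (S M) Hl); [ring|lia]. }
  eapply I_ext. apply (Iadd _ _ H1 H2). intros l; cbv beta; ring.
Qed.

Lemma L1 (I : Falg -> Prop) (HI : is_fine I) (Hsub : forall f, I0_Lambda_n f -> I f)
  (f g e : Falg) M : I e ->
  (forall m lam, (M <= m)%nat -> elems lam = seq 1 m -> f lam <= g lam + e lam) -> qle I f g.
Proof.
  intros He Hfg.
  pose proof HI as [[[_ [Iadd _]] _] _].
  exists (fun l => e l + (if excluded_middle_informative
             (exists m, (M <= m)%nat /\ elems l = seq 1 m) then 0 else Rabs (f l - g l - e l))).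
  split.
  - apply Iadd; auto. apply (KL I HI Hsub M). intros m lam Hm Hl.
    destruct excluded_middle_informative as [_|n]; [reflexivity|].
    exfalso; apply n; exists m; auto.
  - intros l. destruct excluded_middle_informative as [[m [Hm Hl]]|_].
    + specialize (Hfg m l Hm Hl); lra.
    + pose proof (Rle_abs (f l - g l - e l)); lra.
Qed.

Lemma L2 (I : Falg -> Prop) (HI : is_fine I) (Hsub : forall f, I0_Lambda_n f -> I f)
  (u : Falg) M : I u ->
  (forall m lam, (M <= m)%nat -> elems lam = seq 1 m -> u lam <> 0) -> False.
Proof.
  intros Hu Hne. pose proof HI as [[[I0 [Iadd Imul]] [Hn1 _]] _].
  assert (Hw : I (fun l => if excluded_middle_informative
             (exists m, (M <= m)%nat /\ elems l = seq 1 m) then 0 else 1)).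
  { apply (KL I HI Hsub M). intros m lam Hm Hl.
    destruct excluded_middle_informative as [_|n]; [reflexivity|].
    exfalso; apply n; exists m; auto. }
  pose proof (Imul u (fun l => if excluded_middle_informative
             (exists m, (M <= m)%nat /\ elems l = seq 1 m) then / u l else 0) Hu) as Hv.
  apply Hn1. eapply I_ext. apply (Iadd _ _ Hv Hw). intros l. cbv beta.
  destruct excluded_middle_informative as [[m [Hm Hl]]|_].
  - field. apply (Hne m l Hm Hl).
  - ring.
Qed.

Theorem mainTheorem12 (I : Falg -> Prop)
  (HI : is_fine I)
  (Hsub : forall f, I0_Lambda_n f -> I f)
  (A : nat -> Prop) (L : R)
  (HL : Un_cv (fun n => countA A (S n) / INR (S n)) L) :
  (exists rho, represents_P I A rho) /\
  (forall rho, represents_P I A rho -> infinitesimal I (fun l => rho l - L)).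
Proof.
  pose proof HI as [[[I0 [Iadd Imul]] _] _].
  split.
  - exists (fun l => weightA A l / weightAll l). unfold represents_P, qeq.
    eapply I_ext. exact I0. intros l. cbv beta. unfold weightA, weightAll.
    destruct (elems l) as [|k l0] eqn:E.
    + simpl. unfold Rdiv. ring.
    + assert (INR (length (k :: l0)) <> 0) by (apply not_0_INR; simpl; lia).
      field. auto.
  - intros rho Hr n Hn. unfold represents_P, qeq in Hr.
    pose proof (Imul _ (fun l => / weightAll l) Hr) as Ir. cbv beta in Ir.
    pose proof (Imul _ (fun l => -1) Ir) as Inr. cbv beta in Inr.
    assert (Hn0 : 0 < INR n) by (apply lt_0_INR; lia).
    assert (Hn' : 0 < / INR n) by (apply Rinv_0_lt_compat, lt_0_INR; lia).
    destruct (HL _ Hn') as [N HN].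
    assert (HB : forall m lam, (S N <= m)%nat -> elems lam = seq 1 m ->
      Rabs (countA A m / INR m - L) < / INR n /\ weightAll lam = INR m /\
      weightA A lam = countA A m /\ 0 < INR m).
    { intros m lam Hm Hl. destruct m as [|k]; [lia|]. split; [|split; [|split]].
      - specialize (HN k ltac:(lia)). unfold R_dist in HN. exact HN.
      - unfold weightAll; rewrite Hl, length_seq; reflexivity.
      - unfold weightA, countA; rewrite Hl; reflexivity.
      - apply lt_0_INR; lia. }
    split; split.
    + apply (L1 I HI Hsub _ _ _ (S N) Inr). intros m lam Hm Hl.
      destruct (HB m lam Hm Hl) as [Hab [HW [HA Hpos]]]. cbv beta.
      rewrite HW, HA. apply Rabs_def2 in Hab.
      replace (-1 * (/ INR m * (rho lam * INR m - countA A m)))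
        with (countA A m / INR m - rho lam) by (field; repeat split; lra). lra.
    + unfold qeq. intro Hu. apply (L2 I HI Hsub _ (S N) (Iadd _ _ Hu Ir)).
      intros m lam Hm Hl.
      destruct (HB m lam Hm Hl) as [Hab [HW [HA Hpos]]]. cbv beta.
      rewrite HW, HA. apply Rabs_def2 in Hab.
      replace (- / INR n - (rho lam - L) + / INR m * (rho lam * INR m - countA A m))
        with (L - countA A m / INR m - / INR n) by (field; repeat split; lra). intro; lra.
    + apply (L1 I HI Hsub _ _ _ (S N) Ir). intros m lam Hm Hl.
      destruct (HB m lam Hm Hl) as [Hab [HW [HA Hpos]]]. cbv beta.
      rewrite HW, HA. apply Rabs_def2 in Hab.
      replace (/ INR m * (rho lam * INR m - countA A m))
        with (rho lam - countA A m / INR m) by (field; repeat split; lra). lra.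
    + unfold qeq. intro Hu. apply (L2 I HI Hsub _ (S N) (Iadd _ _ Hu Inr)).
      intros m lam Hm Hl.
      destruct (HB m lam Hm Hl) as [Hab [HW [HA Hpos]]]. cbv beta.
      rewrite HW, HA. apply Rabs_def2 in Hab.
      replace (rho lam - L - / INR n + -1 * (/ INR m * (rho lam * INR m - countA A m)))
        with (countA A m / INR m - L - / INR n) by (field; repeat split; lra). intro; lra.
Qed.
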